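(* Let $q\ge 4$ be a power of $2$. Then there exists a linear AOA$(2,3,q+1,q)$.
   Context: An orthogonal array OA$(t,k,v)$ (with $1\le t\le k$) is a $v^t\times k$ array with entries from a set $X$ of size $v$ such that, for every choice of $t$ of its columns, each $t$-tuple in $X^t$ appears exactly once as a row of the corresponding $v^t\times t$ subarray. For integers $1\le s\le t\le k$, an augmented orthogonal array AOA$(s,t,k,v)$ is a $v^t\times(k+1)$ array $A$ such that: (1) the first $k$ columns of $A$ form an OA$(t,k,v)$ on a symbol set $X$ of size $v$; (2) the last column of $A$ has entries from a set $Y$ of size $v^{t-s}$; (3) for any choice of $s$ of the first $k$ columns, these $s$ columns together with the last column contain every $(s+1)$-tuple of $X^s\times Y$ exactly once as a row. For a prime power $q$, an AOA$(s,t,k,q)$ is linear if $X=\mathbb{F}_q$, $Y=\mathbb{F}_q^{t-s}$, and its set of rows, regarded as vectors in $\mathbb{F}_q^{k}\times\mathbb{F}_q^{t-s}=\mathbb{F}_q^{k+t-s}$, is an $\mathbb{F}_q$-linear subspace. *)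

(* Defs.v *)
From HB Require Import structures.
From mathcomp Require Import all_boot all_algebra.
Set Implicit Arguments. Unset Strict Implicit. Unset Printing Implicit Defensive.
Import GRing.Theory.

(* A choice of t columns is a set C of
   t column indices; "each t-tuple appears exactly once" is expressed by
   quantifying over all assignments f of symbols to the columns in C. *)

(* OA(t,k,v) on the symbol set X (v = #|X|). *)
Definition is_OA (t k : nat) (X : finType) (A : seq 'rV[X]_k) : Prop :=
  size A = (#|X| ^ t)%N /\
  forall C : {set 'I_k}, #|C| = t ->
    forall f : 'I_k -> X,
      count (fun r : 'rV[X]_k => [forall i in C, r ord0 i == f i]) A = 1%N.
Arguments is_OA t k {X} A.

(* AOA(s,t,k,v): rows are pairs (first k columns, last column in Y). *)
Definition is_AOA (s t k : nat) (X Y : finType) (A : seq ('rV[X]_k * Y)) : Prop :=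
  [/\ [/\ (1 <= s)%N, (s <= t)%N & (t <= k)%N],
      is_OA t k (map fst A),
      #|Y| = (#|X| ^ (t - s))%N &
      forall C : {set 'I_k}, #|C| = s ->
        forall (f : 'I_k -> X) (y : Y),
          count (fun r : 'rV[X]_k * Y =>
                   [forall i in C, r.1 ord0 i == f i] && (r.2 == y)) A = 1%N].
Arguments is_AOA s t k {X Y} A.

Definition is_linear_AOA (s t k : nat) (F : finFieldType)
    (A : seq ('rV[F]_k * 'rV[F]_(t - s))) : Prop :=
  is_AOA s t k A /\
  exists U : {vspace 'rV[F]_(k + (t - s))},
    forall v : 'rV[F]_(k + (t - s)),
      (v \in U) = has (fun r => row_mx r.1 r.2 == v) A.
Arguments is_linear_AOA s t k {F} A.

(* Main.v *)
Require Import Defs.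
From HB Require Import structures.
From mathcomp Require Import all_boot all_algebra.
From mathcomp Require Import ring finfield.
Set Implicit Arguments. Unset Strict Implicit. Unset Printing Implicit Defensive.
Import GRing.Theory.
Local Open Scope ring_scope.

Section Gen.
Variable F : finFieldType.

Lemma count_sel n (G : 'M[F]_(3, n)) (sel : 'I_3 -> 'I_n) (w : 'I_3 -> F) :
  (forall v : 'rV[F]_3, (forall k, (v *m G) 0 (sel k) = 0) -> v = 0) ->
  count (fun v : 'rV[F]_3 => [forall k, (v *m G) 0 (sel k) == w k]) (enum 'rV[F]_3) = 1%N.
Proof.
move=> ker.
pose N : 'M[F]_3 := \matrix_(j, k) G j (sel k).
have NE v k : (v *m N) 0 k = (v *m G) 0 (sel k).
  by rewrite !mxE; apply: eq_bigr => j _; rewrite mxE.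
have injN : injective (fun v : 'rV[F]_3 => v *m N).
  move=> u v /= e; apply/eqP; rewrite -subr_eq0; apply/eqP; apply: ker => k.
  by rewrite -NE mulmxBl e subrr mxE.
have [g gK Kg] := injF_bij injN.
pose wr : 'rV[F]_3 := \row_k w k.
pose v0 := g wr.
rewrite (eq_count (a2 := pred1 v0)); last first.
  move=> v /=; apply/forallP/eqP => [h|->].
    apply: injN; rewrite /v0 Kg; apply/rowP => k; rewrite NE.
    by move: (h k) => /eqP ->; rewrite mxE.
  by move=> k'; rewrite -NE /v0 Kg mxE.
by rewrite count_uniq_mem ?enum_uniq // mem_enum.
Qed.

Definition e0 : 'I_3 := @Ordinal 3 0 isT.
Definition e1 : 'I_3 := @Ordinal 3 1 isT.
Definition e2 : 'I_3 := @Ordinal 3 2 isT.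

Lemma sum3 (f : 'I_3 -> F) : \sum_j f j = f e0 + f e1 + f e2.
Proof.
rewrite !big_ord_recr big_ord0 /= add0r.
by congr (f _ + f _ + f _); apply: val_inj.
Qed.

Lemma row3_eq0 (v : 'rV[F]_3) : v 0 e0 = 0 -> v 0 e1 = 0 -> v 0 e2 = 0 -> v = 0.
Proof.
move=> h0 h1 h2; apply/rowP => j; rewrite mxE.
case: j => [[|[|[|//]]] p].
- by rewrite -h0; congr (v _ _); apply: val_inj.
- by rewrite -h1; congr (v _ _); apply: val_inj.
- by rewrite -h2; congr (v _ _); apply: val_inj.
Qed.

Definition gen (j : 'I_3) (o : option F) : F :=
  match o with Some s => s ^+ j | None => ((j : nat) == 2%N)%:R end.

Definition dot (v : 'rV[F]_3) (o : option F) : F :=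
  match o with
  | Some s => v 0 e0 + v 0 e1 * s + v 0 e2 * s ^+ 2
  | None => v 0 e2 end.

Lemma dotE (v : 'rV[F]_3) o : \sum_j v 0 j * gen j o = dot v o.
Proof.
rewrite sum3; case: o => [s|] /=; first by rewrite expr0 expr1 mulr1.
by rewrite !mulr0 mulr1 !add0r.
Qed.

Lemma L1 (a b c s t u : F) : s != t -> t != u -> s != u ->
  a + b * s + c * s ^+ 2 = 0 -> a + b * t + c * t ^+ 2 = 0 -> a + b * u + c * u ^+ 2 = 0 ->
  [/\ a = 0, b = 0 & c = 0].
Proof.
move=> st tu su h1 h2 h3.
have e12 : (s - t) * (b + c * (s + t)) = 0.
  by transitivity ((a + b * s + c * s ^+ 2) - (a + b * t + c * t ^+ 2));
    [ring | rewrite h1 h2 subrr].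
have e13 : (s - u) * (b + c * (s + u)) = 0.
  by transitivity ((a + b * s + c * s ^+ 2) - (a + b * u + c * u ^+ 2));
    [ring | rewrite h1 h3 subrr].
move/eqP: e12; rewrite mulf_eq0 subr_eq0 (negbTE st) /= => /eqP e12.
move/eqP: e13; rewrite mulf_eq0 subr_eq0 (negbTE su) /= => /eqP e13.
have : c * (t - u) = 0.
  by transitivity ((b + c * (s + t)) - (b + c * (s + u)));
    [ring | rewrite e12 e13 subrr].
move/eqP; rewrite mulf_eq0 subr_eq0 (negbTE tu) orbF => /eqP c0.
move: e12; rewrite c0 mul0r addr0 => b0.
by move: h1; rewrite b0 c0 !mul0r !addr0 => a0.
Qed.

Lemma L2 (a b c s t : F) : s != t ->
  a + b * s + c * s ^+ 2 = 0 -> a + b * t + c * t ^+ 2 = 0 -> c = 0 ->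
  [/\ a = 0, b = 0 & c = 0].
Proof.
move=> st h1 h2 c0; subst c.
have : (s - t) * b = 0.
  by transitivity ((a + b * s + 0 * s ^+ 2) - (a + b * t + 0 * t ^+ 2));
    [ring | rewrite h1 h2 subrr].
move/eqP; rewrite mulf_eq0 subr_eq0 (negbTE st) /= => /eqP b0.
by move: h1; rewrite b0 !mul0r !addr0 => a0.
Qed.

Lemma L3 (a b c s t : F) : (2%:R : F) = 0 -> s != t ->
  a + b * s + c * s ^+ 2 = 0 -> a + b * t + c * t ^+ 2 = 0 -> b = 0 ->
  [/\ a = 0, b = 0 & c = 0].
Proof.
move=> two st h1 h2 b0; subst b.
have : c * (s - t) ^+ 2 = 0.
  have -> : c * (s - t) ^+ 2 = (a + 0 * s + c * s ^+ 2) - (a + 0 * t + c * t ^+ 2)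
        + 2%:R * (c * (t ^+ 2 - s * t)) by ring.
  by rewrite h1 h2 two subrr mul0r addr0.
move/eqP; rewrite mulf_eq0 expf_eq0 /= subr_eq0 (negbTE st) orbF => /eqP c0.
by move: h1; rewrite c0 !mul0r !addr0 => a0.
Qed.

Lemma kerOA (v : 'rV[F]_3) o1 o2 o3 : o1 != o2 -> o2 != o3 -> o1 != o3 ->
  dot v o1 = 0 -> dot v o2 = 0 -> dot v o3 = 0 -> v = 0.
Proof.
case: o1 => [s|]; case: o2 => [t|]; case: o3 => [u|] //= n12 n23 n13 h1 h2 h3.
- by have [] := L1 n12 n23 n13 h1 h2 h3; apply: row3_eq0.
- by have [] := L2 n12 h1 h2 h3; apply: row3_eq0.
- by have [] := L2 n13 h1 h3 h2; apply: row3_eq0.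
- by have [] := L2 n23 h2 h3 h1; apply: row3_eq0.
Qed.

Lemma kerAOA (v : 'rV[F]_3) o1 o2 : (2%:R : F) = 0 -> o1 != o2 ->
  dot v o1 = 0 -> dot v o2 = 0 -> v 0 e1 = 0 -> v = 0.
Proof.
move=> two; case: o1 => [s|]; case: o2 => [t|] //= n12 h1 h2 h3.
- by have [] := L3 two n12 h1 h2 h3; apply: row3_eq0.
- by apply: row3_eq0 => //; move: h1; rewrite h2 h3 !mul0r !addr0.
- by apply: row3_eq0 => //; move: h2; rewrite h1 h3 !mul0r !addr0.
Qed.


Definition t_of (i : 'I_#|F|.+1) : option F :=
  omap (fun j : 'I_#|F| => nth 0 (enum F) j) (unlift ord_max i).

Lemma t_inj : injective t_of.
Proof.
move=> i j; rewrite /t_of.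
case: unliftP => [i' ->|->]; case: unliftP => [j' ->|->] //= e.
case: e => /eqP; rewrite nth_uniq ?enum_uniq // -?cardT ?ltn_ord //.
by move/eqP/val_inj ->.
Qed.

Definition G1 : 'M[F]_(3, #|F|.+1) := \matrix_(j, i) gen j (t_of i).
Definition G2 : 'M[F]_(3, 3 - 2) := \matrix_(j, k) ((j : nat) == 1%N)%:R.
Definition Gm := row_mx G1 G2.
Definition rowA (v : 'rV[F]_3) := (lsubmx (v *m Gm), rsubmx (v *m Gm)).
Definition Aseq := map rowA (enum 'rV[F]_3).

Lemma GL (v : 'rV[F]_3) i : (v *m Gm) 0 (lshift (3 - 2) i) = dot v (t_of i).
Proof.
rewrite /Gm mul_mx_row row_mxEl mxE -dotE.
by apply: eq_bigr => j _; rewrite mxE.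
Qed.

Lemma GR (v : 'rV[F]_3) : (v *m Gm) 0 (rshift #|F|.+1 ord0) = v 0 e1.
Proof.
rewrite /Gm mul_mx_row row_mxEr mxE sum3 !mxE /=.
by rewrite !mulr0 mulr1 add0r addr0.
Qed.


Lemma eq11 (X Y : 'rV[F]_(3 - 2)) : (X == Y) = (X 0 0 == Y 0 0).
Proof.
apply/eqP/eqP => [-> //|e]; apply/matrixP => i j.
have -> : i = 0 by apply: val_inj; case: i => [[|]].
have -> : j = 0 by apply: val_inj; case: j => [[|]].
exact: e.
Qed.

End Gen.

Theorem theorem3p8 (q : nat) (hq2 : exists m : nat, q = (2 ^ m)%N) (hq4 : (4 <= q)%N)
    (F : finFieldType) (hF : #|F| = q) :
  exists A : seq ('rV[F]_(q.+1) * 'rV[F]_(3 - 2)),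
    is_linear_AOA 2 3 (q.+1) A.
Proof.
subst q; have [m hm] := hq2.
have two : (2%:R : F) = 0.
  by apply: pcharf0; apply: (card_finPcharP hm).
exists (Aseq F); split; last first.
  exists (linfun (mulmxr (Gm F)) @: fullv)%VS => v.
  apply/memv_imgP/hasP => [[u _ ->]|[r /mapP [u _ ->] /eqP <-]].
    exists (rowA u); first by apply: map_f; rewrite mem_enum.
    by rewrite /rowA /= hsubmxK lfunE.
  by exists u; rewrite ?memvf // lfunE /= hsubmxK.
split.
- by split=> //; rewrite ltnS (leq_trans _ hq4).
- split; first by rewrite !size_map -enumT -cardT card_mx.
  move=> C hC f.
  have /card_gt2P [a [b [c [[aC bC cC] [ab bc ca]]]]] : (2 < #|C|)%N by rewrite hC.
  have hmem : forall i, i \in C -> [|| i == a, i == b | i == c].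
    have : [set a; b; c] == C.
      rewrite eqEcard hC; apply/andP; split.
        by apply/subsetP => x; rewrite !inE => /orP [/orP [] |] /eqP ->.
      apply/card_gt2P; exists a, b, c; rewrite !inE !eqxx ?orbT.
      by split; split.
    by move/eqP <- => i; rewrite !inE -orbA.
  pose s3 (k : 'I_3) := if k == e0 then a else if k == e1 then b else c.
  rewrite /Aseq -map_comp count_map.
  rewrite (eq_count (a2 := fun v => [forall k, (v *m Gm F) 0 (lshift (3 - 2) (s3 k)) == f (s3 k)])).
    apply: count_sel => v h.
    apply: (@kerOA F v (t_of a) (t_of b) (t_of c)).
    - by rewrite (inj_eq (@t_inj F)).
    - by rewrite (inj_eq (@t_inj F)).
    - by rewrite (inj_eq (@t_inj F)) eq_sym.
    - by rewrite -GL; apply: (h e0).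
    - by rewrite -GL; apply: (h e1).
    - by rewrite -GL; apply: (h e2).
  move=> v /=; apply/forallP/forallP => h.
    move=> k; have /implyP := h (s3 k); rewrite mxE; apply.
    by rewrite /s3; case: ifP => _; [|case: ifP => _].
  move=> i; apply/implyP => iC; rewrite mxE.
  by case/or3P: (hmem i iC) => /eqP ->; [move: (h e0) | move: (h e1) | move: (h e2)].
- by rewrite card_mx mul1n.
- move=> C hC f y.
  have /cards2P [a [b [ab ->]]] : #|C| == 2%N by rewrite hC.
  pose s2 (k : 'I_3) := if k == e0 then lshift (3 - 2) a
                        else if k == e1 then lshift (3 - 2) b else rshift #|F|.+1 ord0.
  pose w2 (k : 'I_3) := if k == e0 then f a else if k == e1 then f b else y 0 0.
  rewrite /Aseq count_map.
  rewrite (eq_count (a2 := fun v => [forall k, (v *m Gm F) 0 (s2 k) == w2 k])).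
    apply: count_sel => v h.
    apply: (@kerAOA F v (t_of a) (t_of b)) => //.
    - by rewrite (inj_eq (@t_inj F)).
    - by rewrite -GL; apply: (h e0).
    - by rewrite -GL; apply: (h e1).
    - by rewrite -GR; apply: (h e2).
  move=> v /=; rewrite eq11; apply/andP/forallP => [[/forallP h1 h2]|h].
    move=> k; rewrite /s2 /w2; case: ifP => _; [|case: ifP => _].
    - by have /implyP := h1 a; rewrite mxE; apply; rewrite !inE eqxx.
    - by have /implyP := h1 b; rewrite mxE; apply; rewrite !inE eqxx ?orbT.
    - by move: h2; rewrite mxE.
  split.
    apply/forallP => i; apply/implyP; rewrite !inE mxE => /orP [] /eqP ->.
    - by move: (h e0).
    - by move: (h e1).
  by move: (h e2); rewrite [rsubmx _ _ _]mxE.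
Qed.
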